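(* Let $A\subset M$ and $f:M\to\mathbb{R}$ be such that all quantities below are finite. Then \[ 2\inf_{x\in A}\big[f(x)+W(x)\big]-2W(O_1)-h_1\ \ge\ \min_{j\in L}R^{(2)}_j, \] where $R^{(2)}_1=2\inf_{x\in A}[f(x)+V(O_1,x)]-h_1$ and, for $j\in L\setminus\{1\}$, $R^{(2)}_j=2\inf_{x\in A}[f(x)+V(O_j,x)]+W(O_j)-2W(O_1)+W(O_1\cup O_j)$.
   Context: $V:M\times M\to[0,\infty)$ is the Freidlin–Wentzell quasipotential of a small-noise diffusion on a compact manifold $M$: $V(x,y)=\inf\{I_T(\phi):\phi(0)=x,\phi(T)=y,T<\infty\}$ where $I_T(\phi)=\int_0^T\frac12\langle\dot\phi_t-b(\phi_t),[\sigma(\phi_t)\sigma(\phi_t)^T]^{-1}(\dot\phi_t-b(\phi_t))\rangle dt$. $O_1,\dots,O_l$ ($l\ge2$) are the equilibrium points, $L=\{1,\dots,l\}$. Graphs: for $W\subset L$, a $W$-graph on $L$ is a set of arrows $i\to j$ ($i\in L\setminus W$, $j\in L$, $j\ne i$) such that every $i\in L\setminus W$ is the initial point of exactly one arrow and from every $i\in L\setminus W$ a sequence of arrows leads into $W$; $G(W)$ is the set of $W$-graphs, $G(j)=G(\{j\})$, $G(i,j)=G(\{i,j\})$. $W(O_j)=\min_{g\in G(j)}\sum_{(m\to n)\in g}V(O_m,O_n)$, $W(O_1\cup O_j)=\min_{g\in G(1,j)}\sum_{(m\to n)\in g}V(O_m,O_n)$ for $j\ne1$, $W(x)=\min_{j\in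 L}[W(O_j)+V(O_j,x)]$, and $h_1=\min_{\ell\in L\setminus\{1\}}V(O_1,O_\ell)$. *)

(* Defs.v *)
From mathcomp Require Import all_boot.
From Stdlib Require Import Reals.

Set Implicit Arguments.
Unset Strict Implicit.
Unset Printing Implicit Defensive.

Local Open Scope R_scope.

Section QP.
Variables (M : Type) (L : finType) (V : M -> M -> R) (O : L -> M).

(* Minimum of F over the finite collective predicate P (0 if P is empty;
   only used for nonempty P). *)
Definition fmin (T : finType) (P : pred T) (F : T -> R) : R :=
  match [pick x in P] with
  | Some x0 => \big[Rmin/F x0]_(x in P) F x
  | None => 0
  end.

(* A W-graph on L: g encodes the arrows i -> g i for i \notin W (values of
   g on W are irrelevant); every i \notin W has exactly one arrow, no arrow
   is a loop, and from every i \notin W a sequence of arrows leads into W. *)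
Definition is_Wgraph (W : {set L}) (g : {ffun L -> L}) : bool :=
  [forall i, (i \notin W) ==>
     ((g i != i) && [exists w in W, connect (frel g) i w])].

Definition Wgraphs (W : {set L}) : {set {ffun L -> L}} :=
  [set g | is_Wgraph W g].

Definition gcost (W : {set L}) (g : {ffun L -> L}) : R :=
  \big[Rplus/0]_(i | i \notin W) V (O i) (O (g i)).

Definition WO (j : L) : R := fmin (mem (Wgraphs [set j])) (gcost [set j]).

Definition WO2 (i j : L) : R :=
  fmin (mem (Wgraphs [set i; j])) (gcost [set i; j]).

Definition Wx (x : M) : R := fmin predT (fun j => WO j + V (O j) x).

Definition h1 (one : L) : R := fmin (predC1 one) (fun l => V (O one) (O l)).

End QP.

Definition is_inf (S : R -> Prop) (m : R) : Prop :=
  (forall y, S y -> m <= y) /\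
  (forall m', (forall y, S y -> m' <= y) -> m' <= m).

(* Main.v *)
Require Import Defs.
From HB Require Import structures.
From mathcomp Require Import all_boot.
From Stdlib Require Import Reals Lra.

Local Open Scope R_scope.
Set Implicit Arguments.

Lemma Rplus_assoc' : associative Rplus.
Proof. by move=> x y z; rewrite Rplus_assoc. Qed.
Lemma Rplus_comm' : commutative Rplus.
Proof. by move=> x y; rewrite Rplus_comm. Qed.
Lemma Rplus_0_l' : left_id 0 Rplus.
Proof. by move=> x; rewrite Rplus_0_l. Qed.

HB.instance Definition _ := Monoid.isComLaw.Build R 0 Rplus Rplus_assoc' Rplus_comm' Rplus_0_l'.

Lemma big_min_le (T : eqType) (P : pred T) (F : T -> R) z (r : seq T) x :
  x \in r -> P x -> \big[Rmin/z]_(i <- r | P i) F i <= F x.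
Proof.
elim: r => [|a r IH] //=.
rewrite inE big_cons => /orP [/eqP-> | xr] Px.
  rewrite Px; apply Rmin_l.
case: ifP => _; last by apply IH.
eapply Rle_trans; [apply Rmin_r| by apply IH].
Qed.

Lemma big_min_att (T : eqType) (P : pred T) (F : T -> R) z (r : seq T) :
  (exists y, P y /\ \big[Rmin/z]_(i <- r | P i) F i = F y)
  \/ \big[Rmin/z]_(i <- r | P i) F i = z.
Proof.
elim: r => [|a r IH]; first by right; rewrite big_nil.
rewrite big_cons; case: ifP => Pa; last by [].
rewrite /Rmin; case: Rle_dec => _.
  by left; exists a.
exact: IH.
Qed.

Lemma fmin_le (T : finType) (P : pred T) (F : T -> R) x :
  x \in P -> fmin P F <= F x.
Proof.
move=> Px; rewrite /fmin; case: pickP => [x0 Px0|H]; last by rewrite H in Px.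
have := @big_min_le T (fun i => i \in P) F (F x0) (index_enum T) x (mem_index_enum x) Px. by [].
Qed.
Lemma dummy_unused : True. Proof. by [].
Qed.

Lemma fmin_att (T : finType) (P : pred T) (F : T -> R) x :
  x \in P -> exists y, y \in P /\ fmin P F = F y.
Proof.
move=> Px; rewrite /fmin; case: pickP => [x0 Px0|H]; last by rewrite H in Px.
case: (@big_min_att T (fun i => i \in P) F (F x0) (index_enum T)).
  by move=> [y [Py E]]; exists y.
by move=> E; exists x0.
Qed.

Lemma key (M : Type) (L : finType) (V : M -> M -> R) (O : L -> M) (one j : L) :
  j != one -> WO2 V O one j + h1 V O one <= WO V O j.
Proof.
move=> jn.
have g0W : [ffun i => j] \in Wgraphs [set j].
  rewrite inE; apply/forallP => i; apply/implyP; rewrite in_set1 ffunE => ij.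
  rewrite eq_sym ij /=; apply/existsP; exists j; rewrite in_set1 eqxx /=.
  by apply: connect1; rewrite /= ffunE.
have [g [gW E]] := @fmin_att _ (mem (Wgraphs [set j])) (gcost V O [set j]) _ g0W.
rewrite /WO E.
move: (gW); rewrite inE => /forallP gW'.
have g1 : g one != one.
  by have := gW' one; rewrite in_set1 eq_sym jn /= => /andP [].
have g2 : g \in Wgraphs [set one; j].
  rewrite inE; apply/forallP => i; apply/implyP; rewrite in_set2 negb_or => /andP [i1 ij].
  have := gW' i; rewrite in_set1 ij /= => /andP [-> /existsP [w /andP [wj cw]]] /=.
  apply/existsP; exists w; rewrite cw andbT; move: wj; rewrite in_set1 in_set2 => ->.
  by rewrite orbT.
have L1 := @fmin_le _ (mem (Wgraphs [set one; j])) (gcost V O [set one; j]) _ g2.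
have L2 : h1 V O one <= V (O one) (O (g one)).
  by apply: (fmin_le _ (predC1 one) (fun l => V (O one) (O l))); rewrite inE /= g1.
have E2 : gcost V O [set j] g = V (O one) (O (g one)) + gcost V O [set one; j] g.
  rewrite /gcost (bigD1 one); last by rewrite in_set1 eq_sym.
  congr (_ + _); apply: eq_bigl => i.
  by rewrite in_set1 in_set2 negb_or andbC.
rewrite /WO2 in L1 *; lra.
Qed.

Theorem lemma8p3 (M : Type) (L : finType) (one : L)
  (V : M -> M -> R) (O : L -> M) (A : M -> Prop) (f : M -> R)
  (infW : R) (infV : L -> R) :
  leq 2 #|L| ->
  (forall x y, 0 <= V x y) ->
  injective O ->
  is_inf (fun y => exists x, A x /\ y = f x + Wx V O x) infW ->
  (forall j, is_inf (fun y => exists x, A x /\ y = f x + V (O j) x) (infV j)) ->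
  2 * infW - 2 * WO V O one - h1 V O one >=
  fmin predT (fun j =>
    if j == one then 2 * infV one - h1 V O one
    else 2 * infV j + WO V O j - 2 * WO V O one + WO2 V O one j).
Proof.
move=> _ _ _ [_ HW] HV.
set m := fmin _ _.
have Hm : forall j, m <= (if j == one then 2 * infV one - h1 V O one
    else 2 * infV j + WO V O j - 2 * WO V O one + WO2 V O one j).
  by move=> j; apply: fmin_le.
suff : (m + 2 * WO V O one + h1 V O one) / 2 <= infW by lra.
apply: HW => y [x [Ax ->]].
have [j [_ Ej]] := @fmin_att _ predT (fun j => WO V O j + V (O j) x) _ (isT : one \in predT).
rewrite /Wx Ej.
have Hj : infV j <= f x + V (O j) x by apply: (proj1 (HV j)); exists x.
move: Hj (Hm j); case: eqP => [-> | /eqP jn] Hj Hmj.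
  lra.
have := @key _ _ V O _ _ jn; lra.
Qed.
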